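(* In the setting of the context, let $\hat\theta,\hat\xi$ be perturbed parameters satisfying $\|\hat\theta_i-\theta_i\|_2\le\min\{\sigma_\theta,\frac{1}{2\kappa_\theta},\frac{\rho}{2\kappa_\theta B}\}$ for all $1\le i\le L$ and $\|\hat\xi_i-\xi_i\|_2\le\min\{\sigma_\xi,\frac{\sigma_h}{2\kappa_\xi B},\frac{\rho}{4B\kappa_h\kappa_\xi},\frac{1}{4\kappa_h\kappa_\xi}\}$ for all $0\le i\le L-1$. Fix $1\le i\le L$ and suppose that for all $0\le j<i$ and all $x\in\mathcal{X}$: $\tilde h_j(x,\hat\theta,\hat\xi_{(j-1)})=h_j(x,\theta)$ and $\|g_j(x,\hat\theta,\hat\xi)-h_j(x,\theta)\|_2\le\min\{B,\rho\}$. Then for all $x\in\mathcal{X}$, $\|g_i(x,\hat\theta,\hat\xi)-h_i(x,\theta)\|_2\le\min\{B,\rho\}$, and if moreover $i\le L-1$, then $\tilde h_i(x,\hat\theta,\hat\xi_{(i-1)})=h_i(x,\theta)$.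
   Context: Architecture: layer functions $f_0:\mathcal{X}\times\Theta_0\to\mathbb{R}^d$, $f_i:(\mathbb{R}^d)^i\times\Theta_i\to\mathbb{R}^d$ for $1\le i<L$, $f_L:(\mathbb{R}^d)^L\times\Theta_L\to\mathbb{R}$; $\theta=(\theta_0,\dots,\theta_L)$; $h_0(x,\theta)=f_0(x,\theta_0)$, $h_i(x,\theta)=f_i(h_0(x,\theta),\dots,h_{i-1}(x,\theta),\theta_i)$. Correction functions: $c_0,\dots,c_{L-1}:\mathbb{R}^d\times\Xi_i\to\mathbb{R}^d$ with parameters $\xi=(\xi_0,\dots,\xi_{L-1})$ have radius $\rho$ if for all $0\le i\le L-1$, $x\in\mathcal{X}$ and $\hat h\in\mathbb{R}^d$ with $\|\hat h-h_i(x,\theta)\|_2\le\rho$, $c_i(\hat h,\xi_i)=h_i(x,\theta)$; we assume $c_i,\xi$ have radius $\rho$. Corrected model: $g_0(x,\theta,\xi)=f_0(x,\theta_0)$; $\tilde h_i(x,\theta,\xi)=c_i(g_i(x,\theta,\xi),\xi_i)$ for $0\le i\le L-1$; $g_i(x,\theta,\xi)=f_i(\tilde h_0(x,\theta,\xi),\dots,\tilde h_{i-1}(x,\theta,\xi),\theta_i)$ for $1\le i\le L$. Partially perturbed correction parameters: $\hat\xi_{(j)}=(\hat\xi_0,\dots,\hat\xi_j,\xi_{j+1},\dots,\xi_{L-1})$, with $\hat\xi_{(-1)}=\xi$. Norm on tuples: $|||(v_1,\dots,v_i)|||=\max_j\|v_j\|_2$. Niceness: $f(\cdot,\theta)$ is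 $(\kappa_\theta,\kappa_h,\sigma_h,\sigma_\theta)$-nice on a set $\mathcal{H}$ if for all $\hat\theta$ with $\|\theta-\hat\theta\|_2\le\sigma_\theta$ and all $h\in\mathcal{H}$: $\|f(h,\theta)-f(h,\hat\theta)\|_2\le\kappa_\theta\|\theta-\hat\theta\|_2\max\{|||h|||,1\}$, and for all $\hat h$ with $|||h-\hat h|||\le\sigma_h$: $\|f(h,\hat\theta)-f(\hat h,\hat\theta)\|_2\le\kappa_h|||h-\hat h|||$. Assumptions: for each $i\ge1$, $f_i(\cdot,\theta_i)$ is $(\kappa_\theta,\kappa_h,\sigma_h,\sigma_\theta)$-nice on $\{(h_0(x,\theta),\dots,h_{i-1}(x,\theta)):x\in\mathcal{X}\}$; for each $i$, $\|c_i(h,\xi_i)-c_i(h,\hat\xi)\|_2\le\kappa_\xi\max\{\|h\|_2,1\}\|\xi_i-\hat\xi\|_2$ for all $h\in\mathbb{R}^d$ and $\|\xi_i-\hat\xi\|_2\le\sigma_\xi$; and $\max\{\|h_i(x,\theta)\|_2,1\}\le B$ for all $0\le i\le L$, $x\in\mathcal{X}$. *)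

(* Defs.v *)
From HB Require Import structures.
From mathcomp Require Import all_boot all_order all_algebra.
Set Implicit Arguments. Unset Strict Implicit. Unset Printing Implicit Defensive.
Import Order.TTheory GRing.Theory Num.Theory.
Local Open Scope ring_scope.

Section Defs.
Variable R : rcfType.

Definition norm2 (n : nat) (v : 'rV[R]_n) : R :=
  Num.sqrt (\sum_(k < n) v 0 k ^+ 2).

Definition tnorm (d : nat) (s : seq 'rV[R]_d) : R :=
  \big[Num.max/0]_(v <- s) norm2 v.

Definition tsub (d : nat) (s t : seq 'rV[R]_d) : seq 'rV[R]_d :=
  [seq pr.1 - pr.2 | pr <- zip s t].

Definition vdist (d : nat) (a b : 'rV[R]_d) : R := norm2 (a - b).
Definition rdist (a b : R) : R := `|a - b|.

Definition nice (d p : nat) (T : Type) (dist : T -> T -> R)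
    (F : seq 'rV[R]_d -> 'rV[R]_p -> T) (th : 'rV[R]_p)
    (kth kh sh sth : R) (H : seq 'rV[R]_d -> Prop) : Prop :=
  forall thh : 'rV[R]_p, norm2 (th - thh) <= sth ->
  forall hs, H hs ->
    dist (F hs th) (F hs thh) <= kth * norm2 (th - thh) * Num.max (tnorm hs) 1 /\
    (forall hh : seq 'rV[R]_d, size hh = size hs ->
       tnorm (tsub hs hh) <= sh ->
       dist (F hs thh) (F hh thh) <= kh * tnorm (tsub hs hh)).

Variables (X : Type) (d L : nat) (p q : nat -> nat).
Variable f0 : X -> 'rV[R]_(p 0%N) -> 'rV[R]_d.
Variable f : forall i : nat, seq 'rV[R]_d -> 'rV[R]_(p i) -> 'rV[R]_d.
Variable fL : seq 'rV[R]_d -> 'rV[R]_(p L) -> R.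
Variable c : forall i : nat, 'rV[R]_d -> 'rV[R]_(q i) -> 'rV[R]_d.

Definition layer (x : X) (th : forall i, 'rV[R]_(p i)) (n : nat)
    (s : seq 'rV[R]_d) : 'rV[R]_d :=
  match n with
  | 0 => f0 x (th 0%N)
  | n'.+1 => @f n'.+1 s (th n'.+1)
  end.

Fixpoint hseq (x : X) (th : forall i, 'rV[R]_(p i)) (n : nat) : seq 'rV[R]_d :=
  match n with
  | 0 => [::]
  | n'.+1 => rcons (hseq x th n') (layer x th n' (hseq x th n'))
  end.

Definition hval (x : X) (th : forall i, 'rV[R]_(p i)) (i : nat) : 'rV[R]_d :=
  layer x th i (hseq x th i).

Definition hL (x : X) (th : forall i, 'rV[R]_(p i)) : R :=
  fL (hseq x th L) (th L).

Fixpoint htseq (x : X) (th : forall i, 'rV[R]_(p i)) (xi : forall i, 'rV[R]_(q i))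
    (n : nat) : seq 'rV[R]_d :=
  match n with
  | 0 => [::]
  | n'.+1 => rcons (htseq x th xi n')
                   (@c n' (layer x th n' (htseq x th xi n')) (xi n'))
  end.

Definition gval (x : X) (th : forall i, 'rV[R]_(p i)) (xi : forall i, 'rV[R]_(q i))
    (i : nat) : 'rV[R]_d :=
  layer x th i (htseq x th xi i).

Definition gL (x : X) (th : forall i, 'rV[R]_(p i)) (xi : forall i, 'rV[R]_(q i)) : R :=
  fL (htseq x th xi L) (th L).

Definition htval (x : X) (th : forall i, 'rV[R]_(p i)) (xi : forall i, 'rV[R]_(q i))
    (i : nat) : 'rV[R]_d :=
  @c i (gval x th xi i) (xi i).

Definition has_radius (th : forall i, 'rV[R]_(p i)) (xi : forall i, 'rV[R]_(q i))
    (rho : R) : Prop :=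
  forall i : nat, (i < L)%N -> forall (x : X) (hh : 'rV[R]_d),
    norm2 (hh - hval x th i) <= rho -> @c i hh (xi i) = hval x th i.

End Defs.

(* Partially perturbed correction parameters: xi_pre j xi xih = \hat xi_{(j-1)}
   = (xih_0, ..., xih_{j-1}, xi_j, xi_{j+1}, ...). *)
Definition xi_pre (R : Type) (q : nat -> nat) (j : nat)
    (xi xih : forall i, 'rV[R]_(q i)) : forall i, 'rV[R]_(q i) :=
  fun k => if (k < j)%N then xih k else xi k.

(* Main.v *)
Require Import Defs.
From HB Require Import structures.
From mathcomp Require Import all_boot all_order all_algebra.
From mathcomp Require Import ring lra.
Import Order.TTheory GRing.Theory Num.Theory.
Local Open Scope ring_scope.

Section N.
Variable R : rcfType.

Lemma lagrange (n : nat) (a b : 'I_n -> R) :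
  (\sum_k a k * b k) ^+ 2 <= (\sum_k a k ^+ 2) * (\sum_k b k ^+ 2).
Proof.
have H : \sum_i \sum_j (a i * b j - a j * b i) ^+ 2 =
   2 * ((\sum_k a k ^+ 2) * (\sum_k b k ^+ 2) - (\sum_k a k * b k) ^+ 2).
  have -> : \sum_i \sum_j (a i * b j - a j * b i) ^+ 2 =
     \sum_i (\sum_j (a i ^+ 2 * b j ^+ 2) + \sum_j (a j ^+ 2 * b i ^+ 2)
     - 2 * \sum_j (a i * b i * (a j * b j))).
    apply: eq_bigr => i _.
    rewrite mulr_sumr -big_split -sumrB /=; apply: eq_bigr => j _. ring.
  rewrite sumrB big_split /= -mulr_sumr.
  rewrite (exchange_big _ _ _ _ _ (fun i j => a j ^+ 2 * b i ^+ 2)) /=.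
  have E1 : (\sum_k a k ^+ 2) * (\sum_k b k ^+ 2) = \sum_i \sum_j (a i ^+ 2 * b j ^+ 2).
    rewrite mulr_suml; apply: eq_bigr => i _; by rewrite mulr_sumr.
  have E2 : (\sum_k a k * b k) ^+ 2 = \sum_i \sum_j (a i * b i * (a j * b j)).
    rewrite expr2 mulr_suml; apply: eq_bigr => i _; by rewrite mulr_sumr.
  rewrite E1 E2; ring.
have : 0 <= \sum_i \sum_j (a i * b j - a j * b i) ^+ 2.
  by apply: sumr_ge0 => i _; apply: sumr_ge0 => j _; apply: sqr_ge0.
rewrite H; lra.
Qed.


Lemma norm2_ge0 n (v : 'rV[R]_n) : 0 <= norm2 v.
Proof. exact: sqrtr_ge0. Qed.

Lemma norm2N n (v : 'rV[R]_n) : norm2 (- v) = norm2 v.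
Proof. rewrite /norm2; congr Num.sqrt; apply: eq_bigr => k _; by rewrite mxE sqrrN. Qed.

Lemma norm2B n (u v : 'rV[R]_n) : norm2 (u - v) = norm2 (v - u).
Proof. by rewrite -norm2N opprB. Qed.

Lemma norm2D n (u v : 'rV[R]_n) : norm2 (u + v) <= norm2 u + norm2 v.
Proof.
rewrite /norm2.
set A := \sum_k u 0 k ^+ 2; set Bq := \sum_k v 0 k ^+ 2.
set C := \sum_k u 0 k * v 0 k.
have A0 : 0 <= A by apply: sumr_ge0 => k _; apply: sqr_ge0.
have B0 : 0 <= Bq by apply: sumr_ge0 => k _; apply: sqr_ge0.
have -> : \sum_k (u + v) 0 k ^+ 2 = A + Bq + 2 * C.
  rewrite /A /Bq /C mulr_sumr -!big_split /=; apply: eq_bigr => k _; rewrite mxE; ring.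
have HC : C <= Num.sqrt A * Num.sqrt Bq.
  rewrite -sqrtrM // (le_trans (ler_norm C)) // -sqrtr_sqr ler_wsqrtr //.
  exact: (lagrange _ (fun k => u 0 k) (fun k => v 0 k)).
have S0 : 0 <= Num.sqrt A + Num.sqrt Bq by rewrite addr_ge0 // sqrtr_ge0.
rewrite -(ger0_norm S0) -sqrtr_sqr ler_wsqrtr //.
rewrite sqrrD !sqr_sqrtr //; lra.
Qed.

Lemma norm2_tri n (a b c : 'rV[R]_n) : norm2 (a - c) <= norm2 (a - b) + norm2 (b - c).
Proof. by have := norm2D _ (a - b) (b - c); rewrite addrA subrK. Qed.

End N.
Arguments norm2_ge0 {R n}. Arguments norm2N {R n}. Arguments norm2B {R n}.
Arguments norm2D {R n}. Arguments norm2_tri {R n}.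

Lemma iotaSr n : iota 0 n.+1 = rcons (iota 0 n) n.
Proof. by rewrite -addn1 iotaD cats1. Qed.

Lemma hseq_map (R : rcfType) (X : Type) (d : nat) (p : nat -> nat)
    (f0 : X -> 'rV[R]_(p 0%N) -> 'rV[R]_d)
    (f : forall i : nat, seq 'rV[R]_d -> 'rV[R]_(p i) -> 'rV[R]_d) x th n :
  hseq f0 f x th n = [seq hval f0 f x th k | k <- iota 0 n].
Proof. elim: n => [|n IH] //; by rewrite iotaSr map_rcons -IH. Qed.

Lemma htseq_map (R : rcfType) (X : Type) (d : nat) (p q : nat -> nat)
    (f0 : X -> 'rV[R]_(p 0%N) -> 'rV[R]_d)
    (f : forall i : nat, seq 'rV[R]_d -> 'rV[R]_(p i) -> 'rV[R]_d)
    (c : forall i : nat, 'rV[R]_d -> 'rV[R]_(q i) -> 'rV[R]_d) x th xi n :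
  htseq f0 f c x th xi n = [seq htval f0 f c x th xi k | k <- iota 0 n].
Proof. elim: n => [|n IH] //; by rewrite iotaSr map_rcons -IH. Qed.

Lemma htseq_ext (R : rcfType) (X : Type) (d : nat) (p q : nat -> nat)
    (f0 : X -> 'rV[R]_(p 0%N) -> 'rV[R]_d)
    (f : forall i : nat, seq 'rV[R]_d -> 'rV[R]_(p i) -> 'rV[R]_d)
    (c : forall i : nat, 'rV[R]_d -> 'rV[R]_(q i) -> 'rV[R]_d) x th xi1 xi2 n :
  (forall k, (k < n)%N -> xi1 k = xi2 k) ->
  htseq f0 f c x th xi1 n = htseq f0 f c x th xi2 n.
Proof.
elim: n => [|n IH] H //=.
rewrite IH ?H // => k Hk; apply: H; exact: ltnW.
Qed.

Lemma tsub_map (R : rcfType) (d : nat) (T : Type) (F G : T -> 'rV[R]_d) s :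
  tsub (map F s) (map G s) = map (fun k => F k - G k) s.
Proof. by elim: s => [|a s IH] //=; rewrite /tsub /= -IH. Qed.

Lemma tnorm_le (R : rcfType) (d : nat) (T : eqType) (F : T -> 'rV[R]_d) s (M : R) :
  0 <= M -> (forall k, k \in s -> norm2 (F k) <= M) -> tnorm (map F s) <= M.
Proof.
move=> M0 H; rewrite /tnorm big_map big_seq.
apply: (big_ind (fun y => y <= M)) => //.
- by move=> y z Hy Hz; rewrite ge_max Hy Hz.
Qed.

Lemma fin_arith (R : rcfType) (D D1 D2 kth a mx B kh T rho : R) :
  0 < kth -> 0 <= a -> 0 < kh -> 1 <= B -> mx <= B -> a * (2 * kth) <= 1 ->
  a * (2 * kth * B) <= rho -> T * (2 * kh) <= rho -> T * (2 * kh) <= B ->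
  D1 <= kth * a * mx -> D2 <= kh * T -> D <= D2 + D1 -> D <= Num.min B rho.
Proof.
move=> k0 a0 h0 B1 mxB Ha1 Ha2 T1 T2 HD1 HD2 HD.
have ka : 0 <= kth * a by apply: mulr_ge0 => //; apply: ltW.
have F1 : kth * a * mx <= kth * a * B by nra.
have F2 : kth * a * B * 2 <= B by nra.
rewrite le_min; apply/andP; split; nra.
Qed.

Arguments fin_arith {R D D1 D2 kth a mx B kh T rho}.

Theorem mainTheorem11 (R : rcfType) (X : Type) (d L : nat) (p q : nat -> nat)
    (f0 : X -> 'rV[R]_(p 0%N) -> 'rV[R]_d)
    (f : forall i : nat, seq 'rV[R]_d -> 'rV[R]_(p i) -> 'rV[R]_d)
    (fL : seq 'rV[R]_d -> 'rV[R]_(p L) -> R)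
    (c : forall i : nat, 'rV[R]_d -> 'rV[R]_(q i) -> 'rV[R]_d)
    (th : forall i : nat, 'rV[R]_(p i)) (xi : forall i : nat, 'rV[R]_(q i))
    (rho kth kh sh sth kxi sxi B : R)
    (Hkth : 0 < kth) (Hkh : 0 < kh) (Hkxi : 0 < kxi)
    (* the correction functions have radius rho *)
    (Hrad : has_radius L f0 f c th xi rho)
    (* niceness of f_i(., th_i), 1 <= i <= L-1, on {(h_0,...,h_{i-1})(x,th)} *)
    (Hnice : forall i : nat, (1 <= i < L)%N ->
        nice (@vdist R d) (f i) (th i) kth kh sh sth
             (fun hs => exists x : X, hs = hseq f0 f x th i))
    (* niceness of f_L(., th_L) *)
    (HniceL : nice (@rdist R) fL (th L) kth kh sh sth
             (fun hs => exists x : X, hs = hseq f0 f x th L))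
    (* Lipschitzness of c_i in its parameter *)
    (Hc : forall i : nat, (i < L)%N -> forall (h : 'rV[R]_d) (xh : 'rV[R]_(q i)),
        norm2 (xi i - xh) <= sxi ->
        norm2 (c i h (xi i) - c i h xh) <= kxi * Num.max (norm2 h) 1 * norm2 (xi i - xh))
    (* boundedness of the hidden states *)
    (HB : forall x : X, (forall i : nat, (i < L)%N -> Num.max (norm2 (hval f0 f x th i)) 1 <= B)
                        /\ Num.max `|hL f0 f fL x th| 1 <= B)
    (thh : forall i : nat, 'rV[R]_(p i)) (xih : forall i : nat, 'rV[R]_(q i))
    (Hthh : forall i : nat, (1 <= i <= L)%N ->
        norm2 (thh i - th i) <=
          Num.min sth (Num.min (1 / (2 * kth)) (rho / (2 * kth * B))))
    (Hxih : forall i : nat, (i < L)%N ->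
        norm2 (xih i - xi i) <=
          Num.min sxi (Num.min (sh / (2 * kxi * B))
                (Num.min (rho / (4 * B * kh * kxi)) (1 / (4 * kh * kxi)))))
    (i : nat) (Hi : (1 <= i <= L)%N)
    (Hprev : forall j : nat, (j < i)%N -> forall x : X,
        htval f0 f c x thh (xi_pre j xi xih) j = hval f0 f x th j /\
        norm2 (gval f0 f c x thh xih j - hval f0 f x th j) <= Num.min B rho) :
  forall x : X,
    ((i < L)%N -> norm2 (gval f0 f c x thh xih i - hval f0 f x th i) <= Num.min B rho) /\
    (i = L -> `|gL f0 f fL c x thh xih - hL f0 f fL x th| <= Num.min B rho) /\
    ((i <= L.-1)%N -> htval f0 f c x thh (xi_pre i xi xih) i = hval f0 f x th i).
Proof.
move=> x.
case: i Hi Hprev => [//|i] Hi Hprev.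
have iL : (i < L)%N by case/andP: Hi.
have [HBh HBL] := HB x.
have B1 : 1 <= B by move: HBL; rewrite ge_max => /andP[].
have hB : forall j, (j < L)%N -> norm2 (hval f0 f x th j) <= B.
  by move=> j jL; have := HBh j jL; rewrite ge_max => /andP[].
have Hel : forall j, (j < i.+1)%N ->
   norm2 (hval f0 f x th j - htval f0 f c x thh xih j) <=
   kxi * (2 * B) * norm2 (xih j - xi j).
  move=> j ji.
  have jL : (j < L)%N by apply: leq_trans ji iL.
  have [E1 E2] := Hprev j ji x.
  have Eg : gval f0 f c x thh (xi_pre j xi xih) j = gval f0 f c x thh xih j.
    rewrite /gval (@htseq_ext _ _ _ _ _ _ _ _ _ _ _ xih) // => k kj.
    by rewrite /xi_pre kj.
  move: E1; rewrite /htval Eg /xi_pre ltnn => <-.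
  have Hx := Hxih j jL.
  move: (Hx); rewrite !le_min => /andP[Hs _].
  have := Hc j jL (gval f0 f c x thh xih j) (xih j); rewrite norm2B => /(_ Hs) H.
  apply: (le_trans H).
  have d0 := norm2_ge0 (xih j - xi j).
  have Mb : Num.max (norm2 (gval f0 f c x thh xih j)) 1 <= 2 * B.
    rewrite ge_max; apply/andP; split; last lra.
    have := norm2D (gval f0 f c x thh xih j - hval f0 f x th j) (hval f0 f x th j).
    rewrite subrK => T1.
    move: E2; rewrite le_min => /andP[E2 _].
    have := hB j jL; lra.
  move: Mb; set m := Num.max _ _ => Mb.
  have := mulr_ge0 (ltW Hkxi) d0; nra.
have kB : 0 < kxi * B by nra.
have khB : 0 < kh * kxi by nra.
have EB : forall j, (j < i.+1)%N ->
   let e := norm2 (hval f0 f x th j - htval f0 f c x thh xih j) in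
   e <= sh /\ e <= rho / (2 * kh) /\ e <= B / (2 * kh).
  move=> j ji e.
  have jL : (j < L)%N by apply: leq_trans ji iL.
  have He := Hel j ji.
  have d0 := norm2_ge0 (xih j - xi j).
  move: (Hxih j jL); rewrite !le_min => /and4P[_ H1 H2 H3].
  move: H1; rewrite ler_pdivlMr; last by nra.
  move: H2; rewrite ler_pdivlMr; last by nra.
  move: H3; rewrite ler_pdivlMr; last by nra.
  move=> H3 H2 H1.
  have k2 : 0 < 2 * kh by lra.
  rewrite !ler_pdivlMr //.
  split; first by rewrite /e; nra.
  rewrite /e; split; nra.
have hsE : hseq f0 f x th i.+1 = [seq hval f0 f x th k | k <- iota 0 i.+1].
  exact: hseq_map.
have htE : htseq f0 f c x thh xih i.+1 = [seq htval f0 f c x thh xih k | k <- iota 0 i.+1].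
  exact: htseq_map.
have e00 : 0 <= norm2 (hval f0 f x th 0 - htval f0 f c x thh xih 0) by apply: norm2_ge0.
have [E0a [E0b E0c]] := EB 0%N erefl.
have TB : forall M, 0 <= M -> (forall j, (j < i.+1)%N ->
     norm2 (hval f0 f x th j - htval f0 f c x thh xih j) <= M) ->
   tnorm (tsub (hseq f0 f x th i.+1) (htseq f0 f c x thh xih i.+1)) <= M.
  move=> M M0 HM; rewrite hsE htE tsub_map; apply: tnorm_le => // k.
  rewrite mem_iota add0n => /andP[_ ki]; exact: HM.
have T1 : tnorm (tsub (hseq f0 f x th i.+1) (htseq f0 f c x thh xih i.+1)) <= sh.
  apply: TB; [exact: le_trans E0a|]; by move=> j ji; case: (EB j ji).
have T2 : tnorm (tsub (hseq f0 f x th i.+1) (htseq f0 f c x thh xih i.+1)) * (2 * kh) <= rho.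
  rewrite -ler_pdivlMr; last by nra.
  apply: TB; [exact: le_trans E0b|]; by move=> j ji; case: (EB j ji) => _ [].
have T3 : tnorm (tsub (hseq f0 f x th i.+1) (htseq f0 f c x thh xih i.+1)) * (2 * kh) <= B.
  rewrite -ler_pdivlMr; last by nra.
  apply: TB; [exact: le_trans E0c|]; by move=> j ji; case: (EB j ji) => _ [].
have hsB : Num.max (tnorm (hseq f0 f x th i.+1)) 1 <= B.
  rewrite ge_max B1 andbT hsE; apply: tnorm_le; first lra.
  move=> k; rewrite mem_iota add0n => /andP[_ ki]; apply: hB; exact: leq_trans ki iL.
have sz : size (htseq f0 f c x thh xih i.+1) = size (hseq f0 f x th i.+1).
  by rewrite hsE htE !size_map.
have Hth := Hthh i.+1 Hi.
have a0 := norm2_ge0 (th i.+1 - thh i.+1).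
rewrite norm2B !le_min in Hth; case/and3P: Hth => Hs Ha1 Ha2.
have p1 : 0 < 2 * kth by lra.
have p2 : 0 < 2 * kth * B by nra.
rewrite ler_pdivlMr // in Ha1.
rewrite ler_pdivlMr // in Ha2.
have P1 : (i.+1 < L)%N -> norm2 (gval f0 f c x thh xih i.+1 - hval f0 f x th i.+1) <= Num.min B rho.
  move=> iL'.
  have [N1 N2] := Hnice i.+1 iL' (thh i.+1) Hs (hseq f0 f x th i.+1) (ex_intro _ x erefl).
  have N2' := N2 _ sz T1.
  rewrite /vdist in N1 N2'.
  have Htri := norm2_tri (gval f0 f c x thh xih i.+1) (f i.+1 (hseq f0 f x th i.+1) (thh i.+1)) (hval f0 f x th i.+1).
  have HA := fin_arith Hkth a0 Hkh B1 hsB Ha1 Ha2 T2 T3.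
  apply: (HA _ _ _ _ _ Htri).
  - by rewrite norm2B.
  - by rewrite norm2B.
split; first exact: P1.
split.
  move=> Ei; subst L.
  have [N1 N2] := HniceL (thh i.+1) Hs (hseq f0 f x th i.+1) (ex_intro _ x erefl).
  have N2' := N2 _ sz T1.
  rewrite /rdist in N1 N2'.
  have Htri := ler_distD (fL (hseq f0 f x th i.+1) (thh i.+1))
     (gL f0 f fL c x thh xih) (hL f0 f fL x th).
  have HA := fin_arith Hkth a0 Hkh B1 hsB Ha1 Ha2 T2 T3.
  apply: (HA _ _ _ _ _ Htri).
  - by rewrite distrC.
  - by rewrite distrC.
move=> iL1.
have iL' : (i.+1 < L)%N by move: iL1 iL; case: (L) => //.
have := P1 iL'; rewrite le_min => /andP[_ Hr].
rewrite /htval.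
have Eg : gval f0 f c x thh (xi_pre i.+1 xi xih) i.+1 = gval f0 f c x thh xih i.+1.
  rewrite /gval (@htseq_ext _ _ _ _ _ _ _ _ _ _ _ xih) // => k kj.
  by rewrite /xi_pre kj.
rewrite Eg /xi_pre ltnn; apply: Hrad => //.
Qed.
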